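(* There exist finitely presented amenable inverse monoids that are not sofic.
   Context: A monoid is a set with an associative binary operation admitting an identity element. A semigroup $S$ is an inverse semigroup if for every $s \in S$ there is a unique $x \in S$ with $s = sxs$ and $x = xsx$; an inverse monoid is an inverse semigroup that is a monoid. A monoid $M$ is amenable if there is a mean (a positive linear functional of norm one taking value $1$ on the constant function $1$) on $\ell^\infty(M)$ that is invariant under left and right translations by elements of $M$. For a non-empty finite set $X$, $\mathrm{Map}(X)$ denotes the monoid of all maps $X \to X$ under composition (identity $\mathrm{Id}_X$), with the Hamming metric $d_X(f,g) = |\{x \in X : f(x) \neq g(x)\}|/|X|$. For a monoid $M$, finite $K \subset M$ and $\varepsilon,\alpha>0$, a map $\varphi\colon M \to \mathrm{Map}(X)$ is a $(K,\varepsilon)$-morphism if $d_X(\varphi(k_1k_2),\varphi(k_1)\varphi(k_2)) \le \varepsilon$ for all $k_1,k_2 \in K$ and $d_X(\varphi(1_M),\mathrm{Id}_X) \le \varepsilon$; it is $(K,\alpha)$-injective if $d_X(\varphi(k_1),\varphi(k_2)) \ge \alpha$ for all distinct $k_1,k_2 \in K$. $M$ is sofic if for every finite $K \subset M$ and every $\varepsilon>0$ there exist a non-empty finite set $X$ and a $(K,1-\varepsilon)$-injective $(K,\varepsilon)$-morphism $\varphi\colon M \to \mathrm{Map}(X)$. *)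

(* Defs.v *)
From mathcomp Require Import all_boot.
From Stdlib Require Import Reals.
From Stdlib Require List.

Set Implicit Arguments.
Unset Strict Implicit.
Unset Printing Implicit Defensive.

Record monoid := Monoid {
  mcarrier :> Type;
  mop : mcarrier -> mcarrier -> mcarrier;
  mone : mcarrier;
  mopA : forall x y z, mop x (mop y z) = mop (mop x y) z;
  mop1l : forall x, mop mone x = x;
  mop1r : forall x, mop x mone = x
}.

Arguments mop {m}.
Arguments mone {m}.

Definition is_inverse_monoid (M : monoid) : Prop :=
  forall s : M, exists! x : M, s = mop (mop s x) s /\ x = mop (mop x s) x.

Definition bounded_fun (M : Type) (f : M -> R) : Prop :=
  exists C : R, forall x, (Rabs (f x) <= C)%R.

(* A mean on l^oo(M): a positive linear functional of norm one with m(1) = 1.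
   The functional is given on all of M -> R but only its values on bounded
   functions matter. Norm <= 1 is stated as |m f| <= C whenever |f| <= C;
   together with m 1 = 1 this means the norm is exactly one. *)
Definition is_mean (M : Type) (m : (M -> R) -> R) : Prop :=
  (forall f g, bounded_fun f -> bounded_fun g ->
     m (fun x => f x + g x)%R = (m f + m g)%R) /\
  (forall (a : R) f, bounded_fun f -> m (fun x => a * f x)%R = (a * m f)%R) /\
  (forall f, bounded_fun f -> (forall x, 0 <= f x)%R -> (0 <= m f)%R) /\
  (forall f (C : R), bounded_fun f -> (forall x, Rabs (f x) <= C)%R ->
     (Rabs (m f) <= C)%R) /\
  m (fun _ => 1%R) = 1%R.

Definition amenable (M : monoid) : Prop :=
  exists m : (M -> R) -> R, is_mean m /\
    forall (s : M) (f : M -> R), bounded_fun f ->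
      m (fun x => f (mop s x)) = m f /\ m (fun x => f (mop x s)) = m f.

Definition hamming (X : finType) (f g : X -> X) : R :=
  (INR #|[pred x | f x != g x]| / INR #|X|)%R.

Definition KE_morphism (M : monoid) (X : finType) (K : list M) (eps : R)
  (phi : M -> X -> X) : Prop :=
  (forall k1 k2, List.In k1 K -> List.In k2 K ->
     (hamming (phi (mop k1 k2)) (fun x => phi k1 (phi k2 x)) <= eps)%R) /\
  (hamming (phi mone) (fun x => x) <= eps)%R.

Definition KA_injective (M : monoid) (X : finType) (K : list M) (alpha : R)
  (phi : M -> X -> X) : Prop :=
  forall k1 k2, List.In k1 K -> List.In k2 K -> k1 <> k2 ->
    (alpha <= hamming (phi k1) (phi k2))%R.

(* Sofic monoid. Finite subsets K of M are given by lists. *)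
Definition sofic (M : monoid) : Prop :=
  forall (K : list M) (eps : R), (0 < eps)%R ->
    exists (X : finType) (phi : M -> X -> X),
      0 < #|X| /\ @KA_injective M X K (1 - eps)%R phi /\ @KE_morphism M X K eps phi.

Inductive thue_cong (T : Type) (rels : seq (seq T * seq T)) :
    seq T -> seq T -> Prop :=
  | thue_step u v a b : List.In (a, b) rels ->
      thue_cong rels (u ++ a ++ v) (u ++ b ++ v)
  | thue_refl w : thue_cong rels w w
  | thue_sym w1 w2 : thue_cong rels w1 w2 -> thue_cong rels w2 w1
  | thue_trans w1 w2 w3 : thue_cong rels w1 w2 -> thue_cong rels w2 w3 ->
      thue_cong rels w1 w3.

Definition eval_word (M : monoid) (n : nat) (gen : 'I_n -> M) (w : seq 'I_n) : M :=
  foldr (fun i acc => mop (gen i) acc) mone w.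

Definition finitely_presented (M : monoid) : Prop :=
  exists (n : nat) (gen : 'I_n -> M) (rels : seq (seq 'I_n * seq 'I_n)),
    (forall s : M, exists w, eval_word gen w = s) /\
    (forall w1 w2, eval_word gen w1 = eval_word gen w2 <-> thue_cong rels w1 w2).

(* Main.v *)
Require Import Defs.
From mathcomp Require Import all_boot zify.
From Stdlib Require Import Reals Lra.

Definition bop (s t : option (nat*nat)) := match s, t with Some (i,j), Some (k,l) => Some (i + (k - minn j k), (j - minn j k) + l) | _,_ => None end.
Lemma bopA x y z : bop x (bop y z) = bop (bop x y) z.
Proof. case: x => [[i j]|]; case: y => [[k l]|]; case: z => [[m n]|] //=. congr (Some (_,_)); lia. Qed.
Lemma bop1l x : bop (Some (0,0)) x = x.
Proof. case: x => [[i j]|] //=. congr (Some (_,_)); lia. Qed.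
Lemma bop1r x : bop x (Some (0,0)) = x.
Proof. case: x => [[i j]|] //=. congr (Some (_,_)); lia. Qed.

Definition B0 : monoid := @Defs.Monoid (option (nat*nat)) bop (Some (0,0)) bopA bop1l bop1r.

Lemma B0_inverse : is_inverse_monoid B0.
Proof.
case=> [[i j]|].
- exists (Some (j,i)); split.
    split; rewrite /mop /= ; congr (Some (_,_)); lia.
  case=> [[k l]|] /=; last by case.
  move=> [[E1 E2] [E3 E4]]. congr (Some (_,_)); lia.
- exists None; split => //. by case=> [[k l]|] /= [].
Qed.

Lemma B0_amenable : amenable B0.
Proof.
exists (fun f => f None); split.
  split; first by [].
  split; first by [].
  split; first by move=> f _; apply.
  split; first by move=> f C _; apply.
  by [].
by move=> s f _; case: s => [[i j]|].
Qed.

Lemma count_lemma (X: finType) (e psi chi g : X -> X) :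
 #|[pred x | g x != e x]| <= #|[pred x | g x != chi (psi x)]| + #|[pred x | e x != psi (chi x)]| + 2 * #|[pred x | e x != x]|.
Proof.
set D1 := [set x | e x != psi (chi x)].
set D2 := [set x | e x != x].
set D3 := [set x | g x != chi (psi x)].
set D4 := [set x | g x != e x].
have -> : #|[pred x | g x != e x]| = #|D4| by rewrite cardsE.
have -> : #|[pred x | g x != chi (psi x)]| = #|D3| by rewrite cardsE.
have -> : #|[pred x | e x != psi (chi x)]| = #|D1| by rewrite cardsE.
have -> : #|[pred x | e x != x]| = #|D2| by rewrite cardsE.
set S := ~: (D1 :|: D2).
have HS : forall x, x \in S -> psi (chi x) = x.
  move=> x; rewrite !inE negb_or !negbK => /andP[/eqP h1 /eqP h2]; by rewrite -h1 h2.
set T := [set chi x | x in S].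
have HT : #|T| = #|S|.
  apply: card_in_imset => x y Hx Hy E. by rewrite -(HS x Hx) -(HS y Hy) E.
have HS1 : #|S| + #|D1 :|: D2| = #|X| by rewrite addnC cardsC.
have HT1 : #|T| + #|~: T| = #|X| by rewrite cardsC.
have U1 := cardsU D1 D2.
have sub : D4 \subset (D3 :|: ~: T) :|: D2.
  apply/subsetP => x; rewrite !inE => H.
  case: (boolP (x \in T)) => [HxT|]; last by rewrite orbT.
  case/imsetP: HxT => y Hy Exy; subst x.
  rewrite orbF.
  case: (boolP (g (chi y) == chi (psi (chi y)))) => h3 //=; case: (boolP (e (chi y) == chi y)) => h2 //=; by rewrite (eqP h3) (HS y Hy) (eqP h2) eqxx in H.

have := subset_leq_card sub.
have U2 := cardsU (D3 :|: ~: T) D2.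
have U3 := cardsU D3 (~: T).
lia.
Qed.

Definition P : 'I_3 := @Ordinal 3 0 isT.
Definition Q : 'I_3 := @Ordinal 3 1 isT.
Definition Z : 'I_3 := @Ordinal 3 2 isT.
Definition gen (i : 'I_3) : B0 := match val i with 0 => Some (0,1) | 1 => Some (1,0) | _ => None end.
Definition rels : seq (seq 'I_3 * seq 'I_3) :=
  [:: ([::P;Q], [::]); ([::Z;P],[::Z]); ([::P;Z],[::Z]); ([::Z;Q],[::Z]); ([::Q;Z],[::Z]); ([::Z;Z],[::Z])].
Definition nf (s : B0) : seq 'I_3 := match s with Some (i,j) => nseq i Q ++ nseq j P | None => [::Z] end.

Lemma eval_cat u v : eval_word gen (u ++ v) = mop (eval_word gen u) (eval_word gen v).
Proof. elim: u => [|a u IH]; first exact: (esym (mop1l _)). rewrite cat_cons /eval_word /= -/(eval_word gen (u ++ v)) IH. exact: bopA. Qed.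

Lemma sound w1 w2 : thue_cong rels w1 w2 -> eval_word gen w1 = eval_word gen w2.
Proof.
elim=> [u v a b H| w | w1' w2' _ IH | w1' w2' w3' _ IH1 _ IH2]; last first.
- by rewrite IH1.
- by [].
- by [].
rewrite !eval_cat; congr (mop _ (mop _ _)).
move: H => /= H; repeat (case: H => [H|H]; [by case: H => <- <- | ]); by [].
Qed.

Lemma cong_cons x w1 w2 : thue_cong rels w1 w2 -> thue_cong rels (x :: w1) (x :: w2).
Proof.
elim=> [u v a b H| w | w1' w2' _ IH | w1' w2' w3' _ IH1 _ IH2].
- exact: (@thue_step _ rels (x :: u) v a b H).
- exact: thue_refl.
- exact: thue_sym.
- exact: thue_trans IH1 IH2.
Qed.

Ltac inrel := simpl; repeat (first [left; reflexivity | right]).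

Lemma rstep u a b v : List.In (a,b) rels -> thue_cong rels (u ++ a ++ v) (u ++ b ++ v).
Proof. exact: thue_step. Qed.

Lemma zP j : thue_cong rels (Z :: nseq j P) [::Z].
Proof.
elim: j => [|j IH]; first exact: thue_refl.
apply: thue_trans IH.
exact: (@rstep [::] [::Z;P] [::Z] (nseq j P) ltac:(inrel)).
Qed.

Lemma zQ i w : thue_cong rels (Z :: nseq i Q ++ w) (Z :: w).
Proof.
elim: i => [|i IH]; first exact: thue_refl.
apply: thue_trans IH.
exact: (@rstep [::] [::Z;Q] [::Z] (nseq i Q ++ w) ltac:(inrel)).
Qed.

Lemma eval_nf s : eval_word gen (nf s) = s.
Proof.
case: s => [[i j]|] //.
rewrite /nf eval_cat.
have -> : eval_word gen (nseq i Q) = Some (i,0).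
  elim: i => [|i IH] //=. rewrite IH /=. congr (Some (_,_)); lia.
have -> : eval_word gen (nseq j P) = Some (0,j).
  elim: j => [|j IH] //=. rewrite IH /=. congr (Some (_,_)); lia.
rewrite /=; congr (Some (_,_)); lia.
Qed.

Lemma nf_step g e : thue_cong rels (g :: nf e) (nf (mop (gen g) e)).
Proof.
case: g => m Hm; case: m Hm => [|[|[|m]]] Hm; last by [].
- have -> : Ordinal Hm = P by apply: val_inj.
  case: e => [[i j]|]; last first.
    exact: (@rstep [::] [::P;Z] [::Z] [::] ltac:(inrel)).
  case: i => [|i].
    have -> : mop (gen P) (Some (0,j)) = Some (0, j.+1) by rewrite /= ; congr (Some (_,_)); lia.
    exact: thue_refl.
  have -> : mop (gen P) (Some (i.+1,j)) = Some (i, j) by rewrite /= ; congr (Some (_,_)); lia.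
  exact: (@rstep [::] [::P;Q] [::] (nf (Some (i,j))) ltac:(inrel)).
- have -> : Ordinal Hm = Q by apply: val_inj.
  case: e => [[i j]|]; last first.
    exact: (@rstep [::] [::Q;Z] [::Z] [::] ltac:(inrel)).
  have -> : mop (gen Q) (Some (i,j)) = Some (i.+1, j) by rewrite /= ; congr (Some (_,_)); lia.
  exact: thue_refl.
- have -> : Ordinal Hm = Z by apply: val_inj.
  case: e => [[i j]|]; last first.
    exact: (@rstep [::] [::Z;Z] [::Z] [::] ltac:(inrel)).
  rewrite /=. apply: thue_trans (zQ i (nseq j P)) _. exact: zP.
Qed.

Lemma nf_correct w : thue_cong rels w (nf (eval_word gen w)).
Proof.
elim: w => [|g w IH]; first exact: thue_refl.
exact: (thue_trans (cong_cons g _ _ IH) (nf_step g (eval_word gen w))).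
Qed.

Lemma B0_fp : finitely_presented B0.
Proof.
exists 3, gen, rels; split.
  move=> s; exists (nf s); exact: eval_nf.
move=> w1 w2; split; last exact: sound.
move=> E. apply: thue_trans (nf_correct w1) _. rewrite E. apply: thue_sym. exact: nf_correct.
Qed.

Lemma B0_not_sofic : ~ sofic B0.
Proof.
move=> H.
have [X [phi [Hn [Hinj [Hm Hid]]]]] :=
  H [:: Some (0,1); Some (1,0); Some (0,0); Some (1,1)] (1/10)%R ltac:(lra).
have h1 := Hm (Some (0,1)) (Some (1,0)) ltac:(simpl; tauto) ltac:(simpl; tauto).
have h2 := Hm (Some (1,0)) (Some (0,1)) ltac:(simpl; tauto) ltac:(simpl; tauto).
have h4 := Hinj (Some (1,1)) (Some (0,0)) ltac:(simpl; tauto) ltac:(simpl; tauto) ltac:(by []).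
change (mop _ _) with (Some (0,0) : B0) in h1.
change (mop _ _) with (Some (1,1) : B0) in h2.
change (mone) with (Some (0,0) : B0) in Hid.
move: h1 h2 h4 Hid; rewrite /hamming => h1 h2 h4 Hid.
have C := count_lemma X (phi (Some (0,0))) (phi (Some (0,1))) (phi (Some (1,0))) (phi (Some (1,1))).
rewrite mul2n -addnn in C.
move/leP: C => /le_INR C.
rewrite !plus_INR in C.
have Hpos : (0 < INR #|X|)%R by apply: lt_0_INR; apply/ltP.
set c1 := INR _ in h1 C. set c2 := INR _ in h2 C. set c4 := INR _ in h4 C. set c3 := INR _ in Hid C.
set n := INR #|X| in Hpos h1 h2 h4 Hid.
have E : forall c, (c / n = c * / n)%R by move=> c; rewrite /Rdiv.
rewrite !E in h1 h2 h4 Hid.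
have Hinv : (0 < / n)%R by apply: Rinv_0_lt_compat.
have : (c4 * / n <= (c1 + c2 + (c3 + c3)) * / n)%R.
  apply: Rmult_le_compat_r; lra.
nra.
Qed.

Theorem corollary5p5 :
  exists M : monoid,
    is_inverse_monoid M /\ finitely_presented M /\ amenable M /\ ~ sofic M.
Proof.
exists B0; split; first exact: B0_inverse.
split; first exact: B0_fp.
split; first exact: B0_amenable.
exact: B0_not_sofic.
Qed.
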